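(* Let $F,G$ be complete posheaves on a locale $X$ and $\alpha:F\to G$ an order-preserving morphism. The following are equivalent: (1) $\alpha$ is sup-preserving, i.e. $sup_G\circ\alpha_*=\alpha\circ sup_F$ as morphisms $\mathbb{P}F\to G$. (2) For each $u\in\mathcal{O}(X)$, $\alpha_u:F(u)\to G(u)$ preserves arbitrary joins, and for all $v\le u$ in $\mathcal{O}(X)$ we have $\alpha_u\circ f_{v,u}=g_{v,u}\circ\alpha_v$, where $f_{v,u}:F(v)\to F(u)$ and $g_{v,u}:G(v)\to G(u)$ are the left adjoints of the restriction maps $F(u)\to F(v)$ and $G(u)\to G(v)$. (3) $\alpha$ has a right adjoint, i.e. there is an order-preserving $\beta:G\to F$ with $\alpha\dashv\beta$.
   Context: Let $X$ be a locale with frame of opens $\mathcal{O}(X)$. A posheaf on $X$ is a sheaf of sets $F$ with (POS1) each $F(u)$ a poset; (POS2) restriction maps $F(u)\to F(v)$, $x\mapsto x|_v$ ($v\le u$), order-preserving; (POS3) if $u=\bigvee_i u_i$ and $s,t\in F(u)$ satisfy $s|_{u_i}\le t|_{u_i}$ for all $i$, then $s\le t$. Points of $F$ are elements $x\in F(u)$ (for varying $u$), ordered by $x\le y$ ($x\in F(u)$, $y\in F(w)$) iff $u\le w$ and $x\le y|_u$. A morphism of posheaves is order-preserving if it preserves this order; $\alpha\dashv\beta$ means $\alpha x\le y\iff x\le\beta y$ for all points. A posheaf $F$ is complete iff every $F(u)$ is a complete lattice and every restriction map $F(u)\to F(v)$ ($v\le u$) is surjective and has both a left and a right adjoint (equivalently,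 the principal ideal embedding into the sheaf of downsheaves has a left adjoint). $\mathbb{P}F$ is the sheaf with $\mathbb{P}F(u)$ the set of subsheaves of $F^u$ (the restriction of $F$ to $\downarrow u$), ordered by inclusion, with restriction $S\mapsto S^v$. For complete $F$, $sup_F:\mathbb{P}F\to F$ sends $S\in\mathbb{P}F(u)$ to the least $z\in F(u)$ such that $S(v)\subseteq\{y\in F(v)\mid y\le z|_v\}$ for all $v\le u$ (this is the left adjoint of the principal ideal embedding $F\to\mathbb{P}F$). For $\alpha:F\to G$, $\alpha_*:\mathbb{P}F\to\mathbb{P}G$ sends $S\in\mathbb{P}F(u)$ to the subsheaf of $G^u$ generated by the presheaf $v\mapsto\alpha_v(S(v))$. *)

(* Defs.v *)
(** A locale X is given by its frame of opens O(X). *)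
Record Frame := {
  fcar :> Type;
  fle : fcar -> fcar -> Prop;
  fle_refl : forall a, fle a a;
  fle_trans : forall a b c, fle a b -> fle b c -> fle a c;
  fle_antisym : forall a b, fle a b -> fle b a -> a = b;
  fsup : (fcar -> Prop) -> fcar;
  fsup_ub : forall (P : fcar -> Prop) a, P a -> fle a (fsup P);
  fsup_least : forall (P : fcar -> Prop) b,
      (forall a, P a -> fle a b) -> fle (fsup P) b;
  fmeet : fcar -> fcar -> fcar;
  fmeet_l : forall a b, fle (fmeet a b) a;
  fmeet_r : forall a b, fle (fmeet a b) b;
  fmeet_glb : forall a b c, fle c a -> fle c b -> fle c (fmeet a b);
  fdistr : forall a (P : fcar -> Prop),
      fmeet a (fsup P) = fsup (fun w => exists p, P p /\ w = fmeet a p)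
}.
Arguments fle {f} _ _.
Arguments fsup {f} _.
Arguments fmeet {f} _ _.

Definition covers {X : Frame} (u : X) {I : Type} (ui : I -> X) : Prop :=
  u = fsup (fun w => exists i, w = ui i).

Record posheaf (X : Frame) := {
  sec :> X -> Type;
  res : forall u v : X, fle v u -> sec u -> sec v;
  res_id : forall u (h : fle u u) x, res u u h x = x;
  res_comp : forall u v w (h1 : fle v u) (h2 : fle w v) (h3 : fle w u) x,
      res v w h2 (res u v h1 x) = res u w h3 x;
  glue : forall (u : X) (I : Type) (ui : I -> X), covers u ui ->
      forall s : forall i, sec (ui i),
      (forall i j (w : X) (h1 : fle w (ui i)) (h2 : fle w (ui j)),
          res (ui i) w h1 (s i) = res (ui j) w h2 (s j)) ->
      exists t : sec u,
        (forall i (h : fle (ui i) u), res u (ui i) h t = s i) /\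
        (forall t' : sec u,
            (forall i (h : fle (ui i) u), res u (ui i) h t' = s i) -> t' = t);
  ple : forall u, sec u -> sec u -> Prop;
  ple_refl : forall u x, ple u x x;
  ple_trans : forall u x y z, ple u x y -> ple u y z -> ple u x z;
  ple_antisym : forall u x y, ple u x y -> ple u y x -> x = y;
  res_mono : forall u v (h : fle v u) x y,
      ple u x y -> ple v (res u v h x) (res u v h y);
  pos3 : forall (u : X) (I : Type) (ui : I -> X), covers u ui ->
      forall x y, (forall i (h : fle (ui i) u),
                     ple (ui i) (res u (ui i) h x) (res u (ui i) h y)) ->
      ple u x y
}.
Arguments res {X} p {u v} _ _ : rename.
Arguments ple {X} p {u} _ _ : rename.

Record morphism {X : Frame} (F G : posheaf X) := {
  mor :> forall u, F u -> G u;
  mor_nat : forall u v (h : fle v u) x, mor v (res F h x) = res G h (mor u x)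
}.

Definition point {X : Frame} (F : posheaf X) := {u : X & F u}.

Definition pt_le {X : Frame} {F : posheaf X} (p q : point F) : Prop :=
  exists h : fle (projT1 p) (projT1 q),
    ple F (projT2 p) (res F h (projT2 q)).

Definition mor_pt {X : Frame} {F G : posheaf X} (a : morphism F G)
  (p : point F) : point G := existT _ (projT1 p) (a _ (projT2 p)).

Definition order_preserving {X : Frame} {F G : posheaf X} (a : morphism F G) :=
  forall p q, pt_le p q -> pt_le (mor_pt a p) (mor_pt a q).

Definition adjoint {X : Frame} {F G : posheaf X}
  (a : morphism F G) (b : morphism G F) :=
  forall (p : point F) (q : point G),
    pt_le (mor_pt a p) q <-> pt_le p (mor_pt b q).

Definition is_lub {X : Frame} (F : posheaf X) (u : X) (P : F u -> Prop)
  (z : F u) : Prop :=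
  (forall x, P x -> ple F x z) /\
  (forall z', (forall x, P x -> ple F x z') -> ple F z z').

Definition is_left_adj {X : Frame} (F : posheaf X) (u v : X)
  (r : F u -> F v) (l : F v -> F u) : Prop :=
  forall x y, ple F (l x) y <-> ple F x (r y).

Definition is_right_adj {X : Frame} (F : posheaf X) (u v : X)
  (r : F u -> F v) (rr : F v -> F u) : Prop :=
  forall x y, ple F (r x) y <-> ple F x (rr y).

Definition complete {X : Frame} (F : posheaf X) : Prop :=
  (forall (u : X) (P : F u -> Prop), exists z, is_lub F u P z) /\
  (forall (u v : X) (h : fle v u),
     (forall y : F v, exists x : F u, res F h x = y) /\
     (exists l, is_left_adj F u v (res F h) l) /\
     (exists rr, is_right_adj F u v (res F h) rr)).

(** S is a subsheaf of F^u (an element of PF(u)); S v is a subset of F(v),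
    empty unless v <= u. *)
Definition is_subsheaf {X : Frame} (F : posheaf X) (u : X)
  (S : forall v : X, F v -> Prop) : Prop :=
  (forall v x, S v x -> fle v u) /\
  (forall v w (h : fle w v) x, S v x -> S w (res F h x)) /\
  (forall (v : X) (I : Type) (vi : I -> X), covers v vi ->
     forall x : F v, (forall i (h : fle (vi i) v), S (vi i) (res F h x)) ->
     S v x).

Definition sup_ub {X : Frame} (F : posheaf X) (u : X)
  (S : forall v : X, F v -> Prop) (z : F u) : Prop :=
  forall (v : X) (h : fle v u) (y : F v), S v y -> ple F y (res F h z).

Definition is_supP {X : Frame} (F : posheaf X) (u : X)
  (S : forall v : X, F v -> Prop) (z : F u) : Prop :=
  sup_ub F u S z /\ (forall z', sup_ub F u S z' -> ple F z z').

(** alpha_*(S): the subsheaf of G^u generated by v |-> alpha_v(S(v)). *)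
Definition alpha_star {X : Frame} {F G : posheaf X} (a : morphism F G)
  (u : X) (S : forall v : X, F v -> Prop) : forall v : X, G v -> Prop :=
  fun v y => forall T, is_subsheaf G u T ->
     (forall w x, S w x -> T w (a w x)) -> T v y.

(** (1) sup_G o alpha_* = alpha o sup_F *)
Definition sup_preserving {X : Frame} {F G : posheaf X} (a : morphism F G) :=
  forall (u : X) (S : forall v : X, F v -> Prop), is_subsheaf F u S ->
    forall z, is_supP F u S z -> is_supP G u (alpha_star a u S) (a u z).

Definition cond2 {X : Frame} {F G : posheaf X} (a : morphism F G) :=
  (forall (u : X) (P : F u -> Prop) (z : F u), is_lub F u P z ->
      is_lub G u (fun y => exists x, P x /\ y = a u x) (a u z)) /\
  (forall (u v : X) (h : fle v u) (f : F v -> F u) (g : G v -> G u),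
      is_left_adj F u v (res F h) f -> is_left_adj G u v (res G h) g ->
      forall x, a u (f x) = g (a v x)).

Definition has_right_adjoint {X : Frame} {F G : posheaf X} (a : morphism F G) :=
  exists b : morphism G F, order_preserving b /\ adjoint a b.

(* Main.v *)
Require Import Defs.
From Stdlib Require Import Setoid ClassicalEpsilon.

Lemma res_pi {X : Frame} (F : posheaf X) u v (h1 h2 : fle v u) (x : F u) :
  res F h1 x = res F h2 x.
Proof.
  rewrite <- (res_comp X F u v v h1 (fle_refl X v) h2 x). rewrite res_id; reflexivity.
Qed.

Lemma mono_of {X : Frame} {F G : posheaf X} (a : morphism F G)
  (ha : order_preserving a) u (x y : F u) :
  ple F x y -> ple G (a u x) (a u y).
Proof.
  intro H. destruct (ha (existT _ u x) (existT _ u y)) as [h Hh].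
  - exists (fle_refl X u). simpl. rewrite res_id. exact H.
  - simpl in Hh. rewrite res_id in Hh. exact Hh.
Qed.

Definition Dn {X : Frame} {H K : posheaf X} (m : forall w, H w -> K w) (u : X)
  (z : K u) : forall w, H w -> Prop :=
  fun w x => exists h : fle w u, ple K (m w x) (res K h z).

Lemma Dn_sub {X : Frame} (H K : posheaf X) (m : forall w, H w -> K w)
  (hm : forall v w (h : fle w v) x, m w (res H h x) = res K h (m v x)) u z :
  is_subsheaf H u (Dn m u z).
Proof.
  split; [|split].
  - intros v x [h _]; exact h.
  - intros v w h x [h0 H0]. exists (fle_trans X _ _ _ h h0).
    rewrite hm. rewrite <- (res_comp X K u v w h0 h). apply res_mono. exact H0.
  - intros v I vi Hc x Hx.
    assert (Hvi : forall i, fle (vi i) v).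
    { intro i. rewrite Hc. apply fsup_ub. exists i; reflexivity. }
    assert (hv : fle v u).
    { rewrite Hc. apply fsup_least. intros w [i ->].
      destruct (Hx i (Hvi i)) as [h _]. exact h. }
    exists hv. apply (pos3 X K v I vi Hc). intros i h.
    destruct (Hx i h) as [h' Hh']. rewrite hm in Hh'.
    rewrite (res_comp X K u v (vi i) hv h h'). exact Hh'.
Qed.

Definition Gen {X : Frame} (F : posheaf X) (u : X) (Q : forall w, F w -> Prop) :
  forall w, F w -> Prop :=
  fun v x => forall T, is_subsheaf F u T -> (forall w y, Q w y -> T w y) -> T v x.

Lemma Gen_sub {X : Frame} (F : posheaf X) u Q (hQ : forall w y, Q w y -> fle w u) :
  is_subsheaf F u (Gen F u Q).
Proof.
  split; [|split].
  - intros v x Hx. apply (Hx (fun w _ => fle w u)).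
    + split; [|split].
      * auto.
      * intros v0 w h _ H0. exact (fle_trans X _ _ _ h H0).
      * intros v0 I vi Hc x0 Hx0.
        assert (Hvi : forall i, fle (vi i) v0).
        { intro i. rewrite Hc. apply fsup_ub. exists i; reflexivity. }
        rewrite Hc. apply fsup_least. intros w [i ->].
        exact (Hx0 i (Hvi i)).
    + exact hQ.
  - intros v w h x Hx T HT HQ. apply (proj1 (proj2 HT)). apply Hx; auto.
  - intros v I vi Hc x Hx T HT HQ. apply (proj2 (proj2 HT) v I vi Hc).
    intros i h. apply Hx; auto.
Qed.

Lemma supP_iff {X : Frame} (H : posheaf X) u S (z z' : H u) :
  is_supP H u S z -> (ple H z z' <-> sup_ub H u S z').
Proof.
  intros [Hub Hl]. split.
  - intros Hz v h y Hy. eapply ple_trans. apply Hub, Hy. apply res_mono, Hz.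
  - apply Hl.
Qed.

Lemma supP_of_iff {X : Frame} (H : posheaf X) u S (z : H u) :
  (forall z', ple H z z' <-> sup_ub H u S z') -> is_supP H u S z.
Proof. intro K. split. apply K, ple_refl. intros z' Hz'. apply K, Hz'. Qed.

Lemma sup_ub_alt {X : Frame} (H : posheaf X) u S (z' : H u) :
  sup_ub H u S z' <-> (forall w x (h : fle w u), S w x -> ple H x (res H h z')).
Proof. unfold sup_ub. split; intros K; intros; apply K; auto. Qed.

Lemma astar_ub {X : Frame} (F G : posheaf X) (a : morphism F G) u S
  (hS : is_subsheaf F u S) (z' : G u) :
  sup_ub G u (alpha_star a u S) z' <->
  (forall w x (h : fle w u), S w x -> ple G (a w x) (res G h z')).
Proof.
  split.
  - intros Hub w x h Hx. apply Hub. intros T HT HI. apply HI, Hx.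
  - intros Hall v h y Hy.
    destruct (Hy (Dn (fun w (y : G w) => y) u z')
                 (Dn_sub G G (fun w (y : G w) => y) (fun _ _ _ _ => eq_refl) u z'))
      as [h' Hh'].
    + intros w x Hx. exists (proj1 hS w x Hx). apply Hall, Hx.
    + rewrite (res_pi G u v h h'). exact Hh'.
Qed.

Lemma Gen_ub {X : Frame} (F K : posheaf X) (m : forall w, F w -> K w)
  (hm : forall v w (h : fle w v) x, m w (res F h x) = res K h (m v x)) u Q
  (hQ : forall w y, Q w y -> fle w u) (z' : K u) :
  (forall w x (h : fle w u), Gen F u Q w x -> ple K (m w x) (res K h z')) <->
  (forall w x (h : fle w u), Q w x -> ple K (m w x) (res K h z')).
Proof.
  split.
  - intros H w x h Hq. apply H. intros T _ HT. apply HT, Hq.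
  - intros H w x h Hg. destruct (Hg (Dn m u z') (Dn_sub _ _ m hm u z')) as [h' Hh'].
    + intros w0 y Hq. exists (hQ _ _ Hq). apply H, Hq.
    + rewrite (res_pi K u w h h'). exact Hh'.
Qed.

Lemma Gen_ub_id {X : Frame} (F : posheaf X) u Q
  (hQ : forall w y, Q w y -> fle w u) (z' : F u) :
  (forall w x (h : fle w u), Gen F u Q w x -> ple F x (res F h z')) <->
  (forall w x (h : fle w u), Q w x -> ple F x (res F h z')).
Proof.
  exact (Gen_ub F F (fun w x => x) (fun _ _ _ _ => eq_refl) u Q hQ z').
Qed.

Lemma pt_le_iff {X : Frame} (F : posheaf X) u v (h : fle v u) (x : F v) (y : F u) :
  pt_le (existT _ v x : point F) (existT _ u y) <-> ple F x (res F h y).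
Proof.
  split; [intros [h' H]; simpl in *; rewrite (res_pi F u v h h'); exact H
         | intro H; exists h; exact H].
Qed.

Lemma adj_res {X : Frame} {F G : posheaf X} (a : morphism F G) (b : morphism G F)
  (Hab : adjoint a b) u v (h : fle v u) (x : F v) (y : G u) :
  ple G (a v x) (res G h y) <-> ple F x (res F h (b u y)).
Proof.
  rewrite <- (pt_le_iff G u v h (a v x) y), <- (pt_le_iff F u v h x (b u y)).
  exact (Hab (existT _ v x) (existT _ u y)).
Qed.

Lemma adj_same {X : Frame} {F G : posheaf X} (a : morphism F G) (b : morphism G F)
  (Hab : adjoint a b) u (x : F u) (y : G u) :
  ple G (a u x) y <-> ple F x (b u y).
Proof.
  pose proof (adj_res a b Hab u u (fle_refl X u) x y) as K.
  rewrite !res_id in K. exact K.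
Qed.

Section Main.
Variables (X : Frame) (F G : posheaf X) (hF : complete F) (hG : complete G)
  (a : morphism F G) (ha : order_preserving a).

Lemma t3_2 : has_right_adjoint a -> cond2 a.
Proof.
  intros [b [hb Hab]]. split.
  - intros u P z [Hub Hl]. split.
    + intros y [x [Hx ->]]. apply (mono_of a ha), Hub, Hx.
    + intros z' Hz'. apply (adj_same a b Hab). apply Hl. intros x Hx.
      apply (adj_same a b Hab). apply Hz'. exists x; auto.
  - intros u v h f g Hf Hg x. apply (ple_antisym X G u).
    + apply (adj_same a b Hab). apply Hf. apply (adj_res a b Hab).
      apply Hg. apply ple_refl.
    + apply Hg. apply (adj_res a b Hab). apply Hf. apply (adj_same a b Hab).
      apply ple_refl.
Qed.

Lemma t3_1 : has_right_adjoint a -> sup_preserving a.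
Proof.
  intros [b [hb Hab]] u S hS z Hz.
  assert (key : forall z', ple G (a u z) z' <-> sup_ub G u (alpha_star a u S) z').
  { intro z'. rewrite (astar_ub F G a u S hS z'), (adj_same a b Hab),
      (supP_iff F u S z _ Hz), sup_ub_alt.
    split; intros H w x h Hx; apply (adj_res a b Hab); apply H; exact Hx. }
  apply supP_of_iff. exact key.
Qed.

Lemma t2_3 : cond2 a -> has_right_adjoint a.
Proof.
  intros [Hj Hl].
  pose (b0 := fun u (y : G u) =>
     constructive_indefinite_description _ (proj1 hF u (fun x => ple G (a u x) y))).
  pose (bf := fun u y => proj1_sig (b0 u y)).
  assert (Hb : forall u x y, ple G (a u x) y <-> ple F x (bf u y)).
  { intros u x y. destruct (proj2_sig (b0 u y)) as [Hub Hle].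
    split.
    - intro H. apply Hub, H.
    - intro H. eapply ple_trans. apply (mono_of a ha), H.
      destruct (Hj u _ _ (proj2_sig (b0 u y))) as [_ Hl2]. apply Hl2.
      intros t [x0 [Hx0 ->]]. exact Hx0. }
  assert (Hnat : forall u v (h : fle v u) y, bf v (res G h y) = res F h (bf u y)).
  { intros u v h y. destruct (proj2 hF u v h) as [_ [[f Hf] _]].
    destruct (proj2 hG u v h) as [_ [[g Hg] _]].
    assert (E : forall z, ple F z (bf v (res G h y)) <-> ple F z (res F h (bf u y))).
    { intro z. unfold is_left_adj in Hf, Hg. rewrite <- Hb, <- Hg, <- (Hl u v h f g Hf Hg z), Hb, Hf. reflexivity. }
    apply (ple_antisym X F v); [apply E | apply E]; apply ple_refl. }
  assert (Hc : forall u y, ple G (a u (bf u y)) y).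
  { intros u y. apply Hb. apply ple_refl. }
  exists (Build_morphism X G F bf Hnat). split.
  - intros [v y'] [u y] [h Hh]. simpl in *. exists h. simpl.
    rewrite <- Hnat. apply Hb. eapply ple_trans. apply Hc. exact Hh.
  - intros [v x] [u y]. unfold pt_le; simpl. split; intros [h H]; exists h.
    + rewrite <- Hnat. apply Hb. exact H.
    + rewrite <- Hnat in H. apply Hb. exact H.
Qed.

Lemma t1_2 : sup_preserving a -> cond2 a.
Proof.
  intro H1. split.
  - intros u P z Hz.
    set (Q := fun w (x : F w) => exists e : w = u, P (eq_rect w (sec X F) x u e)).
    assert (hQ : forall w x, Q w x -> fle w u).
    { intros w x [e _]. rewrite e. apply fle_refl. }
    assert (HS : is_supP F u (Gen F u Q) z).
    { apply supP_of_iff. intro z'. rewrite sup_ub_alt, (Gen_ub_id F u Q hQ z').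
      split.
      - intros Hz' w x h [e He]. subst w. simpl in He. rewrite res_id.
        eapply ple_trans; [apply (proj1 Hz), He | exact Hz'].
      - intro H. apply (proj2 Hz). intros x Hx.
        specialize (H u x (fle_refl X u)). rewrite res_id in H. apply H.
        exists eq_refl. exact Hx. }
    pose proof (H1 u _ (Gen_sub F u Q hQ) z HS) as HG.
    assert (key : forall z', ple G (a u z) z' <-> forall x, P x -> ple G (a u x) z').
    { intro z'. rewrite (supP_iff G u _ _ z' HG).
      rewrite (astar_ub F G a u _ (Gen_sub F u Q hQ) z').
      rewrite (Gen_ub F G a (mor_nat F G a) u Q hQ z'). split.
      - intros H x Hx. specialize (H u x (fle_refl X u)). rewrite res_id in H.
        apply H. exists eq_refl. exact Hx.
      - intros H w x h [e He]. subst w. simpl in He. rewrite res_id. apply H, He. }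
    split.
    + intros y [x [Hx ->]]. exact (proj1 (key _) (ple_refl X G u _) x Hx).
    + intros z' Hz'. apply key. intros x Hx. apply Hz'. exists x; auto.
  - intros u v h f g Hf Hg x.
    set (Q := fun w (y : F w) => exists e : w = v, eq_rect w (sec X F) y v e = x).
    assert (hQ : forall w y, Q w y -> fle w u).
    { intros w y [e _]. rewrite e. exact h. }
    assert (Hq : forall (K : posheaf X) (m : forall w, F w -> K w) (z' : K u),
      (forall w y (h' : fle w u), Q w y -> ple K (m w y) (res K h' z')) <->
      ple K (m v x) (res K h z')).
    { intros K m z'. split.
      - intro H. apply (H v x h). exists eq_refl. reflexivity.
      - intros H w y h' [e He]. subst w. simpl in He. subst y.
        rewrite (res_pi K u v h' h). exact H. }
    assert (HS : is_supP F u (Gen F u Q) (f x)).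
    { apply supP_of_iff. intro z'. rewrite sup_ub_alt, (Gen_ub_id F u Q hQ z').
      unfold is_left_adj in Hf; rewrite Hf. symmetry. exact (Hq F (fun w y => y) z'). }
    pose proof (H1 u _ (Gen_sub F u Q hQ) (f x) HS) as HG.
    assert (key : forall z', ple G (a u (f x)) z' <-> ple G (g (a v x)) z').
    { intro z'. rewrite (supP_iff G u _ _ z' HG).
      rewrite (astar_ub F G a u _ (Gen_sub F u Q hQ) z').
      rewrite (Gen_ub F G a (mor_nat F G a) u Q hQ z'); unfold is_left_adj in Hg; rewrite Hg. exact (Hq G a z'). }
    apply (ple_antisym X G u); [apply key | apply key]; apply ple_refl.
Qed.

End Main.

Theorem proposition3p3 (X : Frame) (F G : posheaf X)
  (hF : complete F) (hG : complete G)
  (a : morphism F G) (ha : order_preserving a) :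
  (sup_preserving a <-> cond2 a) /\ (cond2 a <-> has_right_adjoint a).
Proof.
  split; split.
  - apply t1_2.
  - intro H2. apply t3_1, t2_3; assumption.
  - apply t2_3; assumption.
  - apply t3_2; assumption.
Qed.
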